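(* Let $X=[0,1[$ and let $\widehat{\operatorname{PC}^{\bowtie}}$ be the group of all bijections $X\to X$ that are continuous outside a finite subset of $X$. Let ${\mathfrak S}_{\mathrm{fin}}\subset \widehat{\operatorname{PC}^{\bowtie}}$ be the subgroup of finitely supported permutations of $X$ and $\varepsilon_{\mathrm{fin}}:{\mathfrak S}_{\mathrm{fin}}\to \mathbb{Z}/2\mathbb{Z}$ the classical signature. Then there exists a group homomorphism $\varepsilon:\widehat{\operatorname{PC}^{\bowtie}}\to \mathbb{Z}/2\mathbb{Z}$ whose restriction to ${\mathfrak S}_{\mathrm{fin}}$ equals $\varepsilon_{\mathrm{fin}}$.
   Context: A permutation of $X$ is finitely supported if it moves only finitely many points. The classical signature of a finitely supported permutation is its sign, written additively in $\mathbb{Z}/2\mathbb{Z}$. *)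

(* Defs.v *)
From Stdlib Require Import Reals List.
Import ListNotations.
Open Scope R_scope.

Definition X : Type := {x : R | 0 <= x < 1}.
Definition xval (x : X) : R := proj1_sig x.

Definition continuous_at_X (f : X -> X) (x : X) : Prop :=
  forall eps : R, 0 < eps -> exists delta : R, 0 < delta /\
    forall y : X, Rabs (xval y - xval x) < delta ->
      Rabs (xval (f y) - xval (f x)) < eps.

Definition bijection (f : X -> X) : Prop :=
  exists g : X -> X, (forall x, g (f x) = x) /\ (forall y, f (g y) = y).

Definition PC_hat (f : X -> X) : Prop :=
  bijection f /\ exists F : list X, forall x : X, ~ In x F -> continuous_at_X f x.

Definition fin_supp_perm (f : X -> X) : Prop :=
  bijection f /\ exists s : list X, forall x : X, f x <> x -> In x s.

Definition is_inversion (f : X -> X) (p : X * X) : bool :=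
  if Rlt_dec (xval (fst p)) (xval (snd p)) then
    if Rlt_dec (xval (f (snd p))) (xval (f (fst p))) then true else false
  else false.

Definition inversions (f : X -> X) (s : list X) : nat :=
  length (filter (is_inversion f) (list_prod s s)).

(* Classical signature (in Z/2Z = bool with xorb): parity of the number of
   inversions of f restricted to its (finite) support. *)
Definition fin_signature (f : X -> X) (b : bool) : Prop :=
  exists s : list X, NoDup s /\ (forall x : X, f x <> x <-> In x s) /\
    b = Nat.odd (inversions f s).

(* Main.v *)
Require Import Defs.
From Stdlib Require Import Reals List Permutation Classical ClassicalEpsilon ProofIrrelevance Arith Lia Lra Btauto.
Import ListNotations.
Open Scope R_scope.
Open Scope bool_scope.


Definition dec (P:Prop) : bool := if excluded_middle_informative P then true else false.
Lemma decP P : dec P = true <-> P.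
Proof. unfold dec; destruct excluded_middle_informative; split; congruence || tauto. Qed.
Lemma decF P : dec P = false <-> ~P.
Proof. unfold dec; destruct excluded_middle_informative; split; congruence || tauto. Qed.

Lemma X_eq (x y : X) : xval x = xval y -> x = y.
Proof. destruct x, y; simpl; intros ->. f_equal. apply proof_irrelevance. Qed.
Lemma X_neq (x y : X) : x <> y -> xval x <> xval y.
Proof. intros H E; apply H, X_eq, E. Qed.
Definition X_eq_dec (x y : X) : {x=y}+{x<>y} := excluded_middle_informative (x=y).

Definition x0 : X := exist _ 0 (conj (Rle_refl 0) Rlt_0_1).
Lemma xval_x0 : xval x0 = 0. Proof. reflexivity. Qed.
Lemma xval_range (x : X) : 0 <= xval x < 1. Proof. exact (proj2_sig x). Qed.

Definition count {A} (p : A -> bool) (l : list A) : nat := length (filter p l).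
Definition dsum {A} (P : A -> A -> bool) (l m : list A) : nat :=
  list_sum (map (fun x => count (P x) m) l).

Lemma count_nil {A} (p : A -> bool) : count p [] = 0%nat. Proof. reflexivity. Qed.
Lemma count_cons {A} (p : A -> bool) a l :
  count p (a :: l) = ((if p a then 1 else 0) + count p l)%nat.
Proof. unfold count; simpl; destruct (p a); reflexivity. Qed.
Lemma count_app {A} (p : A -> bool) l m : count p (l ++ m) = (count p l + count p m)%nat.
Proof. unfold count; rewrite filter_app, length_app; reflexivity. Qed.
Lemma count_ext {A} (p q : A -> bool) l :
  (forall x, In x l -> p x = q x) -> count p l = count q l.
Proof.
  induction l; intros H; [reflexivity|]. rewrite !count_cons, H by (left; auto).
  rewrite IHl; auto. intros; apply H; right; auto.
Qed.
Lemma count_split {A} (p q : A -> bool) l :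
  count p l = (count (fun x => p x && q x) l + count (fun x => p x && negb (q x)) l)%nat.
Proof. induction l; [reflexivity|]. rewrite !count_cons, IHl. destruct (p a), (q a); simpl; lia. Qed.
Lemma count_perm {A} (p : A -> bool) l l' : Permutation l l' -> count p l = count p l'.
Proof.
  induction 1; auto.
  - rewrite !count_cons, IHPermutation; reflexivity.
  - rewrite !count_cons; lia.
  - congruence.
Qed.
Lemma count_map {A B} (p : B -> bool) (h : A -> B) l : count p (map h l) = count (fun x => p (h x)) l.
Proof. induction l; [reflexivity|]. simpl map. rewrite !count_cons, IHl; reflexivity. Qed.
Lemma count_le {A} (p : A -> bool) l : (count p l <= length l)%nat.
Proof. induction l; [unfold count; simpl; lia|]. rewrite count_cons; simpl; destruct (p a); lia. Qed.
Lemma count_false {A} (p : A -> bool) l : (forall x, In x l -> p x = false) -> count p l = 0%nat.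
Proof. intros H. rewrite (count_ext p (fun _ => false)) by auto. clear H. unfold count; induction l; simpl; auto. Qed.
Lemma count_true {A} (p : A -> bool) l : (forall x, In x l -> p x = true) -> count p l = length l.
Proof. intros H. rewrite (count_ext p (fun _ => true)) by auto. clear H. unfold count; induction l; simpl; auto. Qed.
Lemma count_pos {A} (p : A -> bool) l : (count p l > 0)%nat -> exists x, In x l /\ p x = true.
Proof.
  induction l; [unfold count; simpl; lia|]. rewrite count_cons. destruct (p a) eqn:E.
  - intros _; exists a; split; [left|]; auto.
  - intros H; destruct IHl as [x [? ?]]; [lia|]; exists x; split; [right|]; auto.
Qed.
Lemma count_in_pos {A} (p : A -> bool) l x : In x l -> p x = true -> (count p l > 0)%nat.
Proof.
  induction l; simpl; [tauto|]. rewrite count_cons. intros [->|H] Hp.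
  rewrite Hp; lia. specialize (IHl H Hp); lia.
Qed.

Lemma list_sum_add {A} (f g : A -> nat) l :
  list_sum (map (fun x => f x + g x)%nat l) = (list_sum (map f l) + list_sum (map g l))%nat.
Proof. induction l; simpl; [reflexivity|]. rewrite IHl; lia. Qed.
Lemma list_sum_ext {A} (f g : A -> nat) l :
  (forall x, In x l -> f x = g x) -> list_sum (map f l) = list_sum (map g l).
Proof. intros H; f_equal; apply map_ext_in; auto. Qed.
Lemma list_sum_const {A} (f : A -> nat) l c :
  (forall x, In x l -> f x = c) -> list_sum (map f l) = (length l * c)%nat.
Proof. induction l; simpl; intros H; [reflexivity|]. rewrite H, IHl by auto. lia. Qed.

Lemma dsum_cons_l {A} (P : A -> A -> bool) a l m : dsum P (a :: l) m = (count (P a) m + dsum P l m)%nat.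
Proof. reflexivity. Qed.
Lemma dsum_nil_l {A} (P : A -> A -> bool) m : dsum P [] m = 0%nat.
Proof. reflexivity. Qed.
Lemma dsum_ext {A} (P Q : A -> A -> bool) l m :
  (forall x y, In x l -> In y m -> P x y = Q x y) -> dsum P l m = dsum Q l m.
Proof. intros H; unfold dsum; apply list_sum_ext; intros; apply count_ext; auto. Qed.
Lemma dsum_split {A} (P Q : A -> A -> bool) l m :
  dsum P l m = (dsum (fun x y => P x y && Q x y) l m + dsum (fun x y => P x y && negb (Q x y)) l m)%nat.
Proof. unfold dsum. rewrite <- list_sum_add. apply list_sum_ext; intros; apply count_split. Qed.
Lemma dsum_cons_r {A} (P : A -> A -> bool) l a m :
  dsum P l (a :: m) = (count (fun x => P x a) l + dsum P l m)%nat.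
Proof. induction l; [reflexivity|]. rewrite !dsum_cons_l, count_cons, IHl, count_cons. lia. Qed.
Lemma dsum_swap {A} (P : A -> A -> bool) l m : dsum P l m = dsum (fun y x => P x y) m l.
Proof.
  induction m. { unfold dsum. induction l; simpl; auto. }
  rewrite dsum_cons_r, dsum_cons_l, IHm; reflexivity.
Qed.
Lemma dsum_app_l {A} (P : A -> A -> bool) l l' m : dsum P (l ++ l') m = (dsum P l m + dsum P l' m)%nat.
Proof. unfold dsum; rewrite map_app, list_sum_app; reflexivity. Qed.
Lemma dsum_app_r {A} (P : A -> A -> bool) l m m' : dsum P l (m ++ m') = (dsum P l m + dsum P l m')%nat.
Proof. rewrite !(dsum_swap P l). apply dsum_app_l. Qed.
Lemma dsum_perm {A} (P : A -> A -> bool) l l' m m' :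
  Permutation l l' -> Permutation m m' -> dsum P l m = dsum P l' m'.
Proof.
  intros H1 H2. transitivity (dsum P l' m).
  - unfold dsum. apply Permutation_list_sum, Permutation_map, H1.
  - unfold dsum. apply list_sum_ext. intros; apply count_perm, H2.
Qed.
Lemma dsum_map {A} (P : A -> A -> bool) (h : A -> A) l m :
  dsum P (map h l) (map h m) = dsum (fun x y => P (h x) (h y)) l m.
Proof. unfold dsum. rewrite map_map. apply list_sum_ext; intros; apply count_map. Qed.
Lemma dsum_filter_l {A} (P : A -> A -> bool) (q : A -> bool) l m :
  dsum P l m = (dsum P (filter q l) m + dsum P (filter (fun x => negb (q x)) l) m)%nat.
Proof. induction l; [reflexivity|]. simpl filter. destruct (q a); simpl; rewrite !dsum_cons_l, IHl; lia. Qed.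
Lemma dsum_filter_r {A} (P : A -> A -> bool) (q : A -> bool) l m :
  dsum P l m = (dsum P l (filter q m) + dsum P l (filter (fun x => negb (q x)) m))%nat.
Proof. rewrite !(dsum_swap P l). apply dsum_filter_l. Qed.

Lemma list_prod_dsum {A} (P : A -> A -> bool) l m :
  length (filter (fun p => P (fst p) (snd p)) (list_prod l m)) = dsum P l m.
Proof.
  induction l; [reflexivity|]. simpl. rewrite filter_app, length_app, IHl, dsum_cons_l.
  f_equal. clear IHl. unfold count. induction m; simpl; auto. destruct (P a a0); simpl; auto.
Qed.

Definition ltb (x y : X) : bool := if Rlt_dec (xval x) (xval y) then true else false.
Lemma ltbP x y : ltb x y = true <-> xval x < xval y.
Proof. unfold ltb; destruct Rlt_dec; split; congruence || tauto. Qed.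
Lemma ltbF x y : ltb x y = false <-> ~ xval x < xval y.
Proof. unfold ltb; destruct Rlt_dec; split; congruence || tauto. Qed.

Definition inv (f : X -> X) (x y : X) : bool := ltb x y && ltb (f y) (f x).
Lemma inversions_dsum f S : inversions f S = dsum (inv f) S S.
Proof.
  unfold inversions. rewrite <- list_prod_dsum. f_equal. apply filter_ext.
  intros [a b]; unfold is_inversion, inv, ltb; simpl. destruct Rlt_dec, Rlt_dec; reflexivity.
Qed.


Definition adm (f : X -> X) (Z : list X) : Prop :=
  In x0 Z /\ forall x, ~ In x Z -> continuous_at_X f x.
Definition cmp (Z : list X) (x y : X) : Prop :=
  ~ In y Z /\ forall z, In z Z -> (xval z < xval x <-> xval z < xval y).

Lemma comp_refl Z x : ~ In x Z -> cmp Z x x.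
Proof. split; tauto. Qed.
Lemma comp_sym Z x y : ~ In x Z -> cmp Z x y -> cmp Z y x.
Proof. intros H [H1 H2]; split; auto. intros z Hz; rewrite H2; tauto. Qed.
Lemma comp_trans Z x y w : cmp Z x y -> cmp Z y w -> cmp Z x w.
Proof. intros [H1 H2] [H3 H4]; split; auto. intros z Hz; rewrite H2, H4; tauto. Qed.
Lemma comp_notin Z x y : cmp Z x y -> ~ In y Z.
Proof. intros [H _]; auto. Qed.
Lemma comp_ext A B x y : (forall z, In z A <-> In z B) -> (cmp A x y <-> cmp B x y).
Proof.
  intros H; unfold cmp; split; intros [H1 H2]; split.
  - rewrite <- H; auto.
  - intros z Hz; apply H2, H, Hz.
  - rewrite H; auto.
  - intros z Hz; apply H2, H, Hz.
Qed.
Lemma comp_seg Z x y w : ~ In x Z -> cmp Z x y ->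
  (xval x <= xval w <= xval y \/ xval y <= xval w <= xval x) -> cmp Z x w.
Proof.
  intros Hx [Hy H] Hw. split.
  - intros Hin. specialize (H w Hin).
    destruct Hw as [Hw|Hw].
    + assert (xval w = xval y) by (destruct (Rlt_dec (xval w) (xval y)); [|lra];
        assert (xval w < xval x) by tauto; lra).
      apply Hy; rewrite <- (X_eq _ _ H0); auto.
    + assert (xval w = xval x) by (destruct (Rlt_dec (xval w) (xval x)); [|lra];
        assert (xval w < xval y) by tauto; lra).
      apply Hx; rewrite <- (X_eq _ _ H0); auto.
  - intros z Hz; specialize (H z Hz). destruct Hw as [Hw|Hw]; split; intros; try lra.
    all: first [assert (xval z < xval y) by lra; tauto | assert (xval z < xval y) by tauto; lra].
Qed.

Lemma dist_list (x : X) l : (forall z, In z l -> xval z <> xval x) ->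
  exists eta, 0 < eta /\ forall z, In z l -> eta <= Rabs (xval z - xval x).
Proof.
  induction l as [|a l IH]; intros H.
  - exists 1; split; [lra|]; intros z [].
  - destruct IH as [e [He H']]. intros; apply H; right; auto.
    assert (Ha : xval a <> xval x) by (apply H; left; auto).
    exists (Rmin e (Rabs (xval a - xval x))). split.
    + apply Rmin_pos; auto. apply Rabs_pos_lt; lra.
    + intros z [<-|Hz]. apply Rmin_r. eapply Rle_trans; [apply Rmin_l|]; auto.
Qed.

Lemma comp_open Z x : ~ In x Z -> exists eta, 0 < eta /\
  forall y, Rabs (xval y - xval x) < eta -> cmp Z x y.
Proof.
  intros Hx. destruct (dist_list x Z) as [e [He H]].
  { intros z Hz E. apply Hx. rewrite <- (X_eq _ _ E); auto. }
  exists e; split; auto. intros y Hy. split.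
  - intros Hin. specialize (H y Hin). lra.
  - intros z Hz. specialize (H z Hz). split; intros Hl.
    + destruct (Rlt_dec (xval z) (xval y)); auto.
      rewrite Rabs_left in H by lra. rewrite Rabs_left in Hy by lra. lra.
    + destruct (Rlt_dec (xval z) (xval x)); auto.
      assert (xval z <> xval x) by (intro E; rewrite E in H; rewrite Rminus_diag, Rabs_R0 in H; lra).
      rewrite Rabs_right in H by lra. rewrite Rabs_right in Hy by lra. lra.
Qed.

Lemma clamp_range (a b : X) t : 0 <= Rmax (xval a) (Rmin (xval b) t) < 1.
Proof.
  pose proof (xval_range a); pose proof (xval_range b).
  unfold Rmax, Rmin; repeat destruct Rle_dec; lra.
Qed.
Definition clampX a b t : X := exist _ _ (clamp_range a b t).

Lemma eps_delta_continuity (G : R -> R) :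
  (forall t eps, 0 < eps -> exists d, 0 < d /\ forall t', Rabs (t' - t) < d -> Rabs (G t' - G t) < eps) ->
  continuity G.
Proof.
  intros H x. unfold continuity_pt, continue_in, limit1_in, limit_in; simpl; unfold R_dist.
  intros eps Heps. destruct (H x eps Heps) as [d [Hd H']]. exists d; split; auto.
  intros y [_ Hy]; apply H'; auto.
Qed.

Lemma clampX_val a b t : xval a <= t <= xval b -> xval (clampX a b t) = t.
Proof. intros H; unfold clampX; simpl. unfold Rmax, Rmin; repeat destruct Rle_dec; lra. Qed.
Lemma clampX_in a b t : xval a <= xval b -> xval a <= xval (clampX a b t) <= xval b.
Proof. intros H; simpl; unfold Rmax, Rmin; repeat destruct Rle_dec; lra. Qed.
Lemma clampX_lip a b t t' : Rabs (xval (clampX a b t') - xval (clampX a b t)) <= Rabs (t' - t).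
Proof. simpl. unfold Rmax, Rmin; repeat destruct Rle_dec; unfold Rabs; repeat destruct Rcase_abs; lra. Qed.

Lemma IVT_X (f : X -> X) (a b : X) (c : R) : xval a <= xval b ->
  (forall w, xval a <= xval w <= xval b -> continuous_at_X f w) ->
  (xval (f a) <= c <= xval (f b) \/ xval (f b) <= c <= xval (f a)) ->
  exists w, xval a <= xval w <= xval b /\ xval (f w) = c.
Proof.
  intros Hab Hc Hcv.
  set (F := fun t => xval (f (clampX a b t))).
  assert (HF : continuity F).
  { apply eps_delta_continuity. intros t eps Heps.
    destruct (Hc (clampX a b t) (clampX_in a b t Hab) eps Heps) as [d [Hd H]].
    exists d; split; auto. intros t' Ht'. apply H. eapply Rle_lt_trans; [apply clampX_lip|]; auto. }
  assert (Fa : F (xval a) = xval (f a)).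
  { unfold F; do 2 f_equal; apply X_eq; apply clampX_val; lra. }
  assert (Fb : F (xval b) = xval (f b)).
  { unfold F; do 2 f_equal; apply X_eq; apply clampX_val; lra. }
  destruct (Req_dec c (xval (f a))) as [E|Ea]. { exists a; split; [lra|auto]. }
  destruct (Req_dec c (xval (f b))) as [E|Eb]. { exists b; split; [lra|auto]. }
  assert (Hlt : xval a < xval b).
  { destruct (Req_dec (xval a) (xval b)) as [E|]; [|lra]. rewrite (X_eq _ _ E) in Hcv. lra. }
  destruct Hcv as [Hcv|Hcv].
  - destruct (IVT (fun t => F t - c) (xval a) (xval b)) as [z [Hz Gz]]; auto.
    + exact (continuity_minus F (fun _ => c) HF (continuity_const (fun _ : R => c) (fun _ _ => eq_refl))).
    + lra.
    + lra.
    + exists (clampX a b z). rewrite clampX_val by lra. split; [lra|]. unfold F in Gz; lra.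
  - destruct (IVT (fun t => c - F t) (xval a) (xval b)) as [z [Hz Gz]]; auto.
    + exact (continuity_minus (fun _ => c) F (continuity_const (fun _ : R => c) (fun _ _ => eq_refl)) HF).
    + lra.
    + lra.
    + exists (clampX a b z). rewrite clampX_val by lra. split; [lra|]. unfold F in Gz; lra.
Qed.


Definition inj (f : X -> X) := forall x y, f x = f y -> x = y.

Lemma inj_neq f x y : inj f -> xval x <> xval y -> xval (f x) <> xval (f y).
Proof. intros Hf H E. apply H. rewrite (Hf _ _ (X_eq _ _ E)). reflexivity. Qed.

Lemma cont_comp f W x y : adm f W -> cmp W x y -> continuous_at_X f y.
Proof. intros [_ H] Hc; apply H, (comp_notin _ _ _ Hc). Qed.

Lemma comp_between W p u v w : ~ In p W -> cmp W p u -> cmp W p v ->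
  (xval u <= xval w <= xval v \/ xval v <= xval w <= xval u) -> cmp W p w.
Proof.
  intros Hp Hu Hv Hw.
  assert (Hu' := comp_notin _ _ _ Hu).
  assert (Huv : cmp W u v) by (apply (comp_trans W u p v); [apply comp_sym|]; auto).
  apply (comp_trans W p u w); auto. apply comp_seg with (y := v); auto.
Qed.

Lemma IVT_comp f W p u v c : adm f W -> ~ In p W -> cmp W p u -> cmp W p v ->
  (xval (f u) <= c <= xval (f v) \/ xval (f v) <= c <= xval (f u)) ->
  exists w, cmp W p w /\ (xval u <= xval w <= xval v \/ xval v <= xval w <= xval u) /\ xval (f w) = c.
Proof.
  intros Ha Hp Hu Hv Hc.
  destruct (Rle_dec (xval u) (xval v)).
  - destruct (IVT_X f u v c) as [w [Hw Hfw]]; auto.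
    + intros w Hw. apply (cont_comp f W p w); auto. apply (comp_between W p u v w); auto.
    + exists w; split; [apply (comp_between W p u v w); auto|split; auto].
  - destruct (IVT_X f v u c) as [w [Hw Hfw]]; [lra| |tauto|].
    + intros w Hw. apply (cont_comp f W p w); auto. apply (comp_between W p u v w); auto.
    + exists w; split; [apply (comp_between W p u v w); auto|split; auto].
Qed.

Definition same (W : list X) (x y : X) : Prop := x = y \/ (~ In x W /\ cmp W x y).
Lemma same_refl W x : same W x x. Proof. left; auto. Qed.
Lemma same_sym W x y : same W x y -> same W y x.
Proof.
  intros [->|[H1 H2]]; [left; auto|right]. split; [eapply comp_notin; eauto|apply comp_sym; auto].
Qed.
Lemma same_trans W x y w : same W x y -> same W y w -> same W x w.
Proof.
  intros [->|[H1 H2]] H; auto. destruct H as [<-|[H3 H4]]; right; auto.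
  split; auto. eapply comp_trans; eauto.
Qed.
Definition Jb (f : X -> X) (x y : X) : bool := inv f x y || inv f y x.
Lemma lt_not (a b : R) : a <> b -> (a < b <-> ~ b < a).
Proof. intros H; split; intros H'; [lra|]. destruct (Rlt_dec a b); auto. lra. Qed.
Lemma Jb_sym f x y : Jb f x y = Jb f y x.
Proof. unfold Jb; apply Bool.orb_comm. Qed.
Lemma Jb_irr f x : Jb f x x = false.
Proof. unfold Jb, inv. destruct (ltb x x) eqn:E; auto. apply ltbP in E; lra. Qed.

Section Mono.
Variable f : X -> X.
Variable W : list X.
Hypothesis Hf : inj f.
Hypothesis Ha : adm f W.

Lemma IVT_hit p u v t : ~ In p W -> cmp W p u -> cmp W p v ->
  (xval (f u) <= xval (f t) <= xval (f v) \/ xval (f v) <= xval (f t) <= xval (f u)) ->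
  cmp W p t /\ (xval u <= xval t <= xval v \/ xval v <= xval t <= xval u).
Proof.
  intros Hp Hu Hv Hc. destruct (IVT_comp f W p u v (xval (f t))) as [w [Hw [Hw2 Hfw]]]; auto.
  rewrite <- (Hf _ _ (X_eq _ _ Hfw)). auto.
Qed.

Lemma BTW p a b c : ~ In p W -> cmp W p a -> cmp W p b -> cmp W p c ->
  xval a < xval b -> xval b < xval c ->
  (xval (f a) < xval (f b) /\ xval (f b) < xval (f c)) \/
  (xval (f b) < xval (f a) /\ xval (f c) < xval (f b)).
Proof.
  intros Hp Ha' Hb Hc Hab Hbc.
  assert (Nab := inj_neq f a b Hf ltac:(lra)).
  assert (Nbc := inj_neq f b c Hf ltac:(lra)).
  assert (Nac := inj_neq f a c Hf ltac:(lra)).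
  destruct (Rlt_dec (xval (f a)) (xval (f b))), (Rlt_dec (xval (f b)) (xval (f c))),
    (Rlt_dec (xval (f a)) (xval (f c))); try (left; lra); try (right; lra).
  - destruct (IVT_hit p a b c) as [_ H]; auto; lra.
  - destruct (IVT_hit p b c a) as [_ H]; auto; lra.
  - destruct (IVT_hit p b c a) as [_ H]; auto; lra.
  - destruct (IVT_hit p a b c) as [_ H]; auto; lra.
Qed.

Lemma MON2 p u v m M : ~ In p W -> cmp W p u -> cmp W p v -> cmp W p m -> cmp W p M ->
  xval u < xval v -> xval m <= xval u -> xval v <= xval M ->
  (xval (f u) < xval (f v) <-> xval (f m) < xval (f M)).
Proof.
  intros Hp Hu Hv Hm HM Huv Hmu HvM.
  assert (E1 : xval (f u) < xval (f v) <-> xval (f m) < xval (f v)).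
  { destruct (Req_dec (xval m) (xval u)) as [E|E].
    - rewrite (X_eq _ _ E); tauto.
    - destruct (BTW p m u v) as [H|H]; auto; try lra. }
  rewrite E1.
  destruct (Req_dec (xval v) (xval M)) as [E|E].
  - rewrite (X_eq _ _ E); tauto.
  - destruct (BTW p m v M) as [H|H]; auto; try lra.
Qed.

Lemma MON p x y x' y' : ~ In p W -> cmp W p x -> cmp W p y -> cmp W p x' -> cmp W p y' ->
  xval x < xval y -> xval x' < xval y' ->
  (xval (f x) < xval (f y) <-> xval (f x') < xval (f y')).
Proof.
  intros Hp Hx Hy Hx' Hy' H1 H2.
  destruct (Rle_dec (xval x) (xval x')); destruct (Rle_dec (xval y) (xval y')).
  - pose proof (MON2 p x y x y' Hp Hx Hy ltac:(auto) ltac:(auto) H1 ltac:(lra) ltac:(lra)); pose proof (MON2 p x' y' x y' Hp Hx' Hy' ltac:(auto) ltac:(auto) H2 ltac:(lra) ltac:(lra)); tauto.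
  - pose proof (MON2 p x y x y Hp Hx Hy ltac:(auto) ltac:(auto) H1 ltac:(lra) ltac:(lra)); pose proof (MON2 p x' y' x y Hp Hx' Hy' ltac:(auto) ltac:(auto) H2 ltac:(lra) ltac:(lra)); tauto.
  - pose proof (MON2 p x y x' y' Hp Hx Hy ltac:(auto) ltac:(auto) H1 ltac:(lra) ltac:(lra)); pose proof (MON2 p x' y' x' y' Hp Hx' Hy' ltac:(auto) ltac:(auto) H2 ltac:(lra) ltac:(lra)); tauto.
  - pose proof (MON2 p x y x' y Hp Hx Hy ltac:(auto) ltac:(auto) H1 ltac:(lra) ltac:(lra)); pose proof (MON2 p x' y' x' y Hp Hx' Hy' ltac:(auto) ltac:(auto) H2 ltac:(lra) ltac:(lra)); tauto.
Qed.

Lemma Kl p u u' v : ~ In p W -> cmp W p u -> cmp W p u' -> ~ cmp W p v ->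
  (xval u < xval v <-> xval u' < xval v) /\
  (xval (f u) < xval (f v) <-> xval (f u') < xval (f v)).
Proof.
  intros Hp Hu Hu' Hv.
  assert (Nu : xval u <> xval v) by (intro E; apply Hv; rewrite <- (X_eq _ _ E); auto).
  assert (Nu' : xval u' <> xval v) by (intro E; apply Hv; rewrite <- (X_eq _ _ E); auto).
  assert (Fu := inj_neq f u v Hf Nu). assert (Fu' := inj_neq f u' v Hf Nu').
  split.
  - split; intros H.
    + destruct (Rlt_dec (xval u') (xval v)); auto. exfalso; apply Hv.
      apply (comp_between W p u u' v); auto; left; lra.
    + destruct (Rlt_dec (xval u) (xval v)); auto. exfalso; apply Hv.
      apply (comp_between W p u u' v); auto; right; lra.
  - split; intros H.
    + destruct (Rlt_dec (xval (f u')) (xval (f v))); auto. exfalso; apply Hv.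
      apply (IVT_hit p u u' v); auto; left; lra.
    + destruct (Rlt_dec (xval (f u)) (xval (f v))); auto. exfalso; apply Hv.
      apply (IVT_hit p u u' v); auto; right; lra.
Qed.


Lemma JbP x y : xval x <> xval y ->
  (Jb f x y = true <-> ~ ((xval x < xval y) <-> (xval (f x) < xval (f y)))).
Proof.
  intros N. pose proof (inj_neq f x y Hf N) as NF.
  unfold Jb, inv. rewrite Bool.orb_true_iff, !Bool.andb_true_iff, !ltbP.
  pose proof (lt_not _ _ N). pose proof (lt_not _ _ NF). tauto.
Qed.

Lemma KEY x y x' y' : same W x x' -> same W y y' -> xval x <> xval y -> xval x' <> xval y' ->
  Jb f x y = Jb f x' y'.
Proof.
  intros Sx Sy N N'. apply Bool.eq_iff_eq_true. rewrite !JbP by auto.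
  pose proof (inj_neq f x y Hf N) as NF. pose proof (inj_neq f x' y' Hf N') as NF'.
  destruct (classic (same W x y)) as [S|NS].
  - destruct S as [E|[Hx Hxy]]; [subst; lra|].
    assert (Hxx' : cmp W x x') by (destruct Sx as [<-|[_ H]]; [apply comp_refl|]; auto).
    assert (Hyy' : cmp W x y') by (destruct Sy as [<-|[_ H]]; [auto|apply (comp_trans W x y y'); auto]).
    assert (Hxx := comp_refl W x Hx).
    pose proof (lt_not _ _ N). pose proof (lt_not _ _ NF).
    pose proof (lt_not _ _ N'). pose proof (lt_not _ _ NF').
    destruct (Rlt_dec (xval x) (xval y)), (Rlt_dec (xval x') (xval y')).
    + pose proof (MON x x y x' y'); tauto.
    + pose proof (MON x x y y' x'); assert (xval y' < xval x') by lra. tauto.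
    + pose proof (MON x y x x' y'); assert (xval y < xval x) by lra. tauto.
    + pose proof (MON x y x y' x'); assert (xval y < xval x) by lra; assert (xval y' < xval x') by lra. tauto.
  - assert (A : (xval x < xval y <-> xval x' < xval y) /\ (xval (f x) < xval (f y) <-> xval (f x') < xval (f y))).
    { destruct Sx as [<-|[Hx Hxx']]; [tauto|].
      apply (Kl x); auto. apply comp_refl; auto. intro C; apply NS; right; auto. }
    assert (NS' : ~ same W x' y) by (intro C; apply NS; eapply same_trans; eauto).
    assert (Nx'y : xval x' <> xval y) by (intro E; apply NS'; left; apply X_eq; auto).
    assert (B : (xval y < xval x' <-> xval y' < xval x') /\ (xval (f y) < xval (f x') <-> xval (f y') < xval (f x'))).
    { destruct Sy as [<-|[Hy Hyy']]; [tauto|].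
      apply (Kl y); auto. apply comp_refl; auto. intro C; apply NS'; apply same_sym; right; auto. }
    pose proof (inj_neq f x' y Hf Nx'y) as NF2.
    pose proof (lt_not _ _ N'). pose proof (lt_not _ _ NF').
    pose proof (lt_not _ _ Nx'y). pose proof (lt_not _ _ NF2).
    tauto.
Qed.

End Mono.


Lemma x0_notin_pos (Z : list X) w : In x0 Z -> ~ In w Z -> 0 < xval w.
Proof.
  intros H0 Hw. destruct (xval_range w). destruct (Req_dec (xval w) 0) as [E|]; [|lra].
  exfalso; apply Hw. replace w with x0 by (apply X_eq; rewrite E; reflexivity). auto.
Qed.

Section Lstar.
Variable g gi : X -> X.
Variable Z : list X.
Hypothesis Hg1 : forall x, gi (g x) = x.
Hypothesis Hg2 : forall y, g (gi y) = y.
Hypothesis Ha : adm g Z.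

Lemma Hf : inj g.
Proof. intros x y E. rewrite <- (Hg1 x), <- (Hg1 y), E. reflexivity. Qed.

Lemma notin_map x : ~ In x Z -> ~ In (g x) (map g Z).
Proof. intros Hx Hin; apply in_map_iff in Hin as [z [E Hz]]. apply Hf in E; subst; auto. Qed.

Lemma LOPEN w : ~ In w Z -> exists d, 0 < d /\
  forall u : X, Rabs (xval u - xval (g w)) < d -> exists v, cmp Z w v /\ g v = u.
Proof.
  intros Hw. destruct (comp_open Z w Hw) as [e [He Ho]].
  assert (Hw0 : 0 < xval w) by (apply (x0_notin_pos Z); auto; apply (proj1 Ha)).
  pose proof (xval_range w) as Rw.
  set (w1 := xval w - Rmin e (xval w) / 2).
  set (w2 := xval w + Rmin e (1 - xval w) / 2).
  assert (R1 : 0 <= w1 < 1) by (unfold w1; unfold Rmin; destruct Rle_dec; lra).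
  assert (R2 : 0 <= w2 < 1) by (unfold w2; unfold Rmin; destruct Rle_dec; lra).
  set (W1 := exist (fun t => 0 <= t < 1) w1 R1 : X).
  set (W2 := exist (fun t => 0 <= t < 1) w2 R2 : X).
  assert (V1 : xval W1 = w1) by reflexivity.
  assert (V2 : xval W2 = w2) by reflexivity.
  assert (L1 : w1 < xval w) by (unfold w1, Rmin; destruct Rle_dec; lra).
  assert (L2 : xval w < w2) by (unfold w2, Rmin; destruct Rle_dec; lra).
  assert (C1 : cmp Z w W1).
  { apply Ho. rewrite V1. unfold w1, Rmin; destruct Rle_dec; unfold Rabs; destruct Rcase_abs; lra. }
  assert (C2 : cmp Z w W2).
  { apply Ho. rewrite V2. unfold w2, Rmin; destruct Rle_dec; unfold Rabs; destruct Rcase_abs; lra. }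
  assert (Cw := comp_refl Z w Hw).
  destruct (BTW g Z Hf Ha w W1 w W2) as [H|H]; auto; try lra.
  - exists (Rmin (xval (g w) - xval (g W1)) (xval (g W2) - xval (g w))). split.
    + apply Rmin_pos; lra.
    + intros u Hu. assert (Hu' : xval (g W1) < xval u < xval (g W2)).
      { revert Hu; unfold Rmin; destruct Rle_dec; unfold Rabs; destruct Rcase_abs; intros; lra. }
      destruct (IVT_comp g Z w W1 W2 (xval u)) as [v [Hv [_ Hgv]]]; auto; try lra.
      exists v; split; auto. apply X_eq; auto.
  - exists (Rmin (xval (g W1) - xval (g w)) (xval (g w) - xval (g W2))). split.
    + apply Rmin_pos; lra.
    + intros u Hu. assert (Hu' : xval (g W2) < xval u < xval (g W1)).
      { revert Hu; unfold Rmin; destruct Rle_dec; unfold Rabs; destruct Rcase_abs; intros; lra. }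
      destruct (IVT_comp g Z w W1 W2 (xval u)) as [v [Hv [_ Hgv]]]; auto; try lra.
      exists v; split; auto. apply X_eq; auto.
Qed.

Lemma Lfwd x y : ~ In x Z -> cmp Z x y -> cmp (map g Z) (g x) (g y).
Proof.
  intros Hx Hxy. split.
  - apply notin_map. eapply comp_notin; eauto.
  - intros z' Hz'. apply in_map_iff in Hz' as [z [<- Hz]].
    assert (Hy := comp_notin _ _ _ Hxy).
    assert (Nzx : xval (g z) <> xval (g x)).
    { apply (inj_neq g z x Hf). intro E; apply Hx; rewrite <- (X_eq _ _ E); auto. }
    assert (Nzy : xval (g z) <> xval (g y)).
    { apply (inj_neq g z y Hf). intro E; apply Hy; rewrite <- (X_eq _ _ E); auto. }
    assert (NB : ~ (xval (g x) <= xval (g z) <= xval (g y) \/ xval (g y) <= xval (g z) <= xval (g x))).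
    { intro HB. destruct (IVT_hit g Z Hf Ha x x y z) as [C _]; auto. apply comp_refl; auto.
      apply (comp_notin _ _ _ C Hz). }
    split; intros H.
    + destruct (Rlt_dec (xval (g z)) (xval (g y))); auto. exfalso; apply NB; right; lra.
    + destruct (Rlt_dec (xval (g z)) (xval (g x))); auto. exfalso; apply NB; left; lra.
Qed.

Lemma Laux x y : ~ In x Z -> ~ In y Z -> xval (g x) < xval (g y) ->
  cmp (map g Z) (g x) (g y) -> cmp Z x y.
Proof.
  intros Hx Hy Hlt Hc. apply NNPP; intros Nxy.
  set (E := fun t => xval (g x) <= t /\ forall u : X, xval (g x) <= xval u <= t -> cmp Z x (gi u)).
  assert (EB : forall t, E t -> t < xval (g y)).
  { intros t [Ht1 Ht2]. destruct (Rlt_dec t (xval (g y))); auto. exfalso; apply Nxy.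
    rewrite <- (Hg1 y). apply Ht2; lra. }
  assert (E0 : E (xval (g x))).
  { split; [lra|]. intros u Hu. replace u with (g x) by (apply X_eq; lra). rewrite Hg1. apply comp_refl; auto. }
  destruct (completeness E) as [s [Hub Hlub]].
  { exists (xval (g y)). intros t Ht; left; apply EB; auto. }
  { exists (xval (g x)); auto. }
  assert (Hs1 : xval (g x) <= s) by (apply Hub; auto).
  assert (Hs2 : s <= xval (g y)) by (apply Hlub; intros t Ht; left; apply EB; auto).
  assert (Rs : 0 <= s < 1) by (pose proof (xval_range (g y)); pose proof (xval_range (g x)); lra).
  set (sX := exist (fun t => 0 <= t < 1) s Rs : X).
  assert (VsX : xval sX = s) by reflexivity.
  assert (Below : forall u : X, xval (g x) <= xval u < s -> cmp Z x (gi u)).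
  { intros u Hu. destruct (classic (exists t, E t /\ xval u < t)) as [[t [Et Ht]]|N].
    - apply (proj2 Et). lra.
    - exfalso. assert (s <= xval u); [|lra]. apply Hlub. intros t Et.
      destruct (Rle_dec t (xval u)); auto. exfalso; apply N; exists t; split; auto; lra. }
  assert (HsC : cmp (map g Z) (g x) sX).
  { apply comp_seg with (y := g y); [apply notin_map; auto | auto | left; rewrite VsX; lra]. }
  set (w := gi sX).
  assert (Hgw : g w = sX) by apply Hg2.
  assert (Hw : ~ In w Z).
  { intro Hin. apply (comp_notin _ _ _ HsC). rewrite <- Hgw. apply in_map; auto. }
  destruct (LOPEN w Hw) as [d [Hd Hop]]. rewrite Hgw, VsX in Hop.
  destruct (classic (cmp Z x w)) as [Cxw|Nxw].
  - assert (E (s + d / 2)).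
    { split; [lra|]. intros u Hu. destruct (Rlt_dec (xval u) (s - d / 2)).
      - apply Below; lra.
      - destruct (Hop u) as [v [Hv Hgv]].
        { unfold Rabs; destruct Rcase_abs; lra. }
        rewrite <- Hgv, Hg1. apply (comp_trans Z x w v); auto. }
    assert (s + d / 2 <= s) by (apply Hub; auto). lra.
  - destruct (Req_dec s (xval (g x))) as [Es|Ns].
    + apply Nxw. unfold w. replace sX with (g x) by (apply X_eq; rewrite VsX; auto).
      rewrite Hg1. apply comp_refl; auto.
    + assert (Ru : 0 <= Rmax (xval (g x)) (s - d / 2) < 1).
      { pose proof (xval_range (g x)); unfold Rmax; destruct Rle_dec; lra. }
      set (uX := exist (fun t => 0 <= t < 1) _ Ru : X).
      assert (VuX : xval uX = Rmax (xval (g x)) (s - d / 2)) by reflexivity.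
      destruct (Hop uX) as [v [Hv Hgv]].
      { rewrite VuX; unfold Rmax; destruct Rle_dec; unfold Rabs; destruct Rcase_abs; lra. }
      assert (Cxv : cmp Z x (gi uX)).
      { apply Below. rewrite VuX; unfold Rmax; destruct Rle_dec; lra. }
      rewrite <- Hgv, Hg1 in Cxv. apply Nxw.
      apply (comp_trans Z x v w); auto. apply comp_sym; auto.
Qed.

Lemma Lstar x y : ~ In x Z -> (cmp Z x y <-> cmp (map g Z) (g x) (g y)).
Proof.
  intros Hx. split; [apply Lfwd; auto|]. intros Hc.
  assert (Hy : ~ In y Z) by (intro Hin; apply (comp_notin _ _ _ Hc); apply in_map; auto).
  destruct (Rtotal_order (xval (g x)) (xval (g y))) as [H|[H|H]].
  - apply Laux; auto.
  - replace y with x by (apply Hf, X_eq; auto). apply comp_refl; auto.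
  - apply comp_sym; auto. apply Laux; auto. apply comp_sym; auto. apply notin_map; auto.
Qed.

End Lstar.


Lemma mod4_lin a k : ((a + 4 * k) mod 4 = a mod 4)%nat.
Proof. rewrite Nat.mul_comm. apply Nat.Div0.mod_add. Qed.
Lemma mod4_3 a b : (a mod 4 = 3 -> b mod 4 = 3 -> (a + 1 + b) mod 4 = 3)%nat.
Proof. intros. rewrite (Nat.div_mod_eq a 4), (Nat.div_mod_eq b 4), H, H0.
replace (4 * (a/4) + 3 + 1 + (4*(b/4) + 3))%nat with (3 + 4 * (a/4 + b/4 + 1))%nat by lia. rewrite mod4_lin. reflexivity. Qed.
Lemma odd_mod4 a b : ((2*a) mod 4 = (2*b) mod 4 -> Nat.odd a = Nat.odd b)%nat.
Proof. intros H.
rewrite (Nat.div2_odd a), (Nat.div2_odd b) in H.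
replace (2 * (2 * Nat.div2 a + Nat.b2n (Nat.odd a)))%nat with (2 * Nat.b2n (Nat.odd a) + 4 * Nat.div2 a)%nat in H by lia.
replace (2 * (2 * Nat.div2 b + Nat.b2n (Nat.odd b)))%nat with (2 * Nat.b2n (Nat.odd b) + 4 * Nat.div2 b)%nat in H by lia.
rewrite !mod4_lin in H. destruct (Nat.odd a), (Nat.odd b); auto; simpl in H; discriminate. Qed.

Lemma dec_iff (P Q : Prop) : (P <-> Q) -> dec P = dec Q.
Proof. intros H; apply Bool.eq_iff_eq_true; rewrite !decP; auto. Qed.
Lemma dec_and (P Q : Prop) : dec P && dec Q = dec (P /\ Q).
Proof. unfold dec; repeat destruct excluded_middle_informative; tauto. Qed.
Lemma dec_not (P : Prop) : negb (dec P) = dec (~ P).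
Proof. unfold dec; repeat destruct excluded_middle_informative; tauto. Qed.

Definition cc (Z : list X) (x : X) (S : list X) : nat := count (fun y => dec (cmp Z x y)) S.

Lemma cc_ext A B x S : (forall z, In z A <-> In z B) -> cc A x S = cc B x S.
Proof.
  intros H. unfold cc. apply count_ext. intros y _. apply Bool.eq_iff_eq_true.
  rewrite !decP. apply comp_ext; auto.
Qed.

Lemma count_eq1 (S : list X) w : NoDup S -> In w S -> count (fun y => dec (y = w)) S = 1%nat.
Proof.
  induction S as [|a S IH]; intros Hn Hw; [destruct Hw|]. inversion Hn; subst.
  rewrite count_cons. destruct Hw as [<-|Hw].
  - rewrite (proj2 (decP _) eq_refl). rewrite count_false; auto.
    intros y Hy; apply decF; intros ->; auto.
  - rewrite (proj2 (decF _)). rewrite IH; auto. intros ->; auto.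
Qed.

Lemma maxbelow (l : list X) (w : X) : (exists z, In z l /\ xval z < xval w) ->
  exists a, In a l /\ xval a < xval w /\ forall z, In z l -> xval z < xval w -> xval z <= xval a.
Proof.
  induction l as [|b l IH]; intros [z [Hz Hzw]]; [destruct Hz|].
  destruct (classic (exists z, In z l /\ xval z < xval w)) as [E|N].
  - destruct (IH E) as [a [Ha [Haw Hmax]]].
    destruct (Rlt_dec (xval b) (xval w)) as [Hb|Hb].
    + destruct (Rle_dec (xval b) (xval a)).
      * exists a; repeat split; [right; auto|auto|]. intros z' [<-|Hz'] Hlt; auto.
      * exists b; repeat split; [left; auto|auto|]. intros z' [<-|Hz'] Hlt; [lra|]. specialize (Hmax z' Hz' Hlt); lra.
    + exists a; repeat split; [right; auto|auto|]. intros z' [<-|Hz'] Hlt; [lra|auto].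
  - destruct Hz as [<-|Hz]; [|exfalso; apply N; exists z; auto].
    exists b; repeat split; [left; auto|auto|]. intros z' [<-|Hz'] Hlt; [lra|]. exfalso; apply N; exists z'; auto.
Qed.

Lemma minabove (l : list X) (w : X) : exists b, xval w < b <= 1 /\
  (forall z, In z l -> xval w < xval z -> b <= xval z) /\ (b = 1 \/ exists z, In z l /\ xval z = b).
Proof.
  pose proof (xval_range w).
  induction l as [|a l IH].
  - exists 1; repeat split; try lra; try (intros z []); try (left; auto).
  - destruct IH as [b [Hb [Hmin Hex]]].
    destruct (Rlt_dec (xval w) (xval a)).
    + destruct (Rle_dec (xval a) b).
      * exists (xval a). pose proof (xval_range a). repeat split; try lra.
        -- intros z [<-|Hz] Hlt; [lra|]. specialize (Hmin z Hz Hlt); lra.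
        -- right; exists a; split; [left|]; auto.
      * exists b; repeat split; try lra.
        -- intros z [<-|Hz] Hlt; [lra|auto].
        -- destruct Hex as [E|[z [Hz E]]]; [left; auto|right; exists z; split; [right|]; auto].
    + exists b; repeat split; try lra.
      * intros z [<-|Hz] Hlt; [lra|auto].
      * destruct Hex as [E|[z [Hz E]]]; [left; auto|right; exists z; split; [right|]; auto].
Qed.

Lemma CHAR (L : list X) (lo hi : R) (p : X) :
  lo < xval p < hi -> (forall z, In z L -> xval z <= lo \/ hi <= xval z) ->
  (exists z, In z L /\ xval z = lo) -> (hi = 1 \/ exists z, In z L /\ xval z = hi) ->
  forall y, cmp L p y <-> lo < xval y < hi.
Proof.
  intros Hp NoZ [zl [Hzl Ezl]] Hhi y. pose proof (xval_range y) as Ry. split.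
  - intros [Hy Hc]. split.
    + assert (Hl : xval zl < xval p) by lra. apply Hc in Hl; auto. lra.
    + destruct Hhi as [E|[zh [Hzh Ezh]]]; [lra|].
      assert (~ xval zh < xval y) by (rewrite <- (Hc zh Hzh); lra).
      destruct (Req_dec (xval y) hi) as [E|]; [|lra]. exfalso; apply Hy.
      replace y with zh by (apply X_eq; lra). auto.
  - intros Hy. split.
    + intros Hin. destruct (NoZ y Hin); lra.
    + intros z Hz. destruct (NoZ z Hz); split; intros; lra.
Qed.

Lemma STEP (Z1 : list X) (w : X) (S : list X) : In x0 Z1 -> NoDup S -> In w S ->
  (forall x, ~ In x (w :: Z1) -> (cc (w :: Z1) x S mod 4 = 3)%nat) ->
  forall x, ~ In x Z1 -> (cc Z1 x S mod 4 = 3)%nat.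
Proof.
  intros H0 HS HwS H x Hx.
  destruct (classic (In w Z1)) as [Hw|Hw].
  { rewrite (cc_ext Z1 (w :: Z1)). apply H. intros [<-|]; auto.
    intro z; simpl; split; [auto|intros [<-|]; auto]. }
  destruct (classic (cmp Z1 x w)) as [Cxw|Nxw].
  - assert (Hw0 : 0 < xval w) by (apply (x0_notin_pos Z1); auto).
    destruct (maxbelow Z1 w) as [a [Ha [Haw Hmax]]].
    { exists x0; split; [auto|rewrite xval_x0; lra]. }
    destruct (minabove Z1 w) as [b [Hb [Hmin Hbex]]].
    assert (NoZ : forall z, In z Z1 -> xval z <= xval a \/ b <= xval z).
    { intros z Hz. destruct (Rlt_dec (xval z) (xval w)); [left; auto|right].
      apply Hmin; auto. destruct (Req_dec (xval z) (xval w)) as [E|]; [|lra].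
      exfalso; apply Hw. rewrite <- (X_eq _ _ E); auto. }
    pose proof (xval_range w) as Rw. pose proof (xval_range a) as Ra.
    assert (R1 : 0 <= (xval a + xval w) / 2 < 1) by lra.
    assert (R2 : 0 <= (xval w + b) / 2 < 1) by lra.
    set (x1 := exist (fun t => 0 <= t < 1) _ R1 : X).
    set (x2 := exist (fun t => 0 <= t < 1) _ R2 : X).
    assert (V1 : xval x1 = (xval a + xval w) / 2) by reflexivity.
    assert (V2 : xval x2 = (xval w + b) / 2) by reflexivity.
    assert (C0 : forall y, cmp Z1 w y <-> xval a < xval y < b).
    { apply (CHAR Z1 (xval a) b w); [lra|auto|exists a; auto|auto]. }
    assert (C1 : forall y, cmp (w :: Z1) x1 y <-> xval a < xval y < xval w).
    { apply (CHAR (w :: Z1) (xval a) (xval w) x1); [rewrite V1; lra| | |].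
      - intros z [<-|Hz]; [right; lra|]. destruct (NoZ z Hz); [left|right]; lra.
      - exists a; split; [right|]; auto.
      - right; exists w; split; [left|]; auto. }
    assert (C2 : forall y, cmp (w :: Z1) x2 y <-> xval w < xval y < b).
    { apply (CHAR (w :: Z1) (xval w) b x2); [rewrite V2; lra| | |].
      - intros z [<-|Hz]; [left; lra|]. destruct (NoZ z Hz); [left|right]; lra.
      - exists w; split; [left|]; auto.
      - destruct Hbex as [E|[z [Hz E]]]; [left; auto|right; exists z; split; [right|]; auto]. }
    assert (N1 : ~ In x1 (w :: Z1)).
    { intro Hin; assert (Hc : cmp (w::Z1) x1 x1) by (apply C1; rewrite V1; lra). exact (comp_notin _ _ _ Hc Hin). }
    assert (N2 : ~ In x2 (w :: Z1)).
    { intro Hin; assert (Hc : cmp (w::Z1) x2 x2) by (apply C2; rewrite V2; lra). exact (comp_notin _ _ _ Hc Hin). }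
    assert (E : cc Z1 x S = (cc (w :: Z1) x1 S + 1 + cc (w :: Z1) x2 S)%nat).
    { unfold cc. rewrite (count_ext _ (fun y => dec (xval a < xval y < b))).
      2:{ intros y _; apply dec_iff. rewrite <- C0. split; intros Hc.
          - apply (comp_trans Z1 w x y); auto. apply comp_sym; auto.
          - apply (comp_trans Z1 x w y); auto. }
      rewrite (count_split _ (fun y => dec (xval y < xval w))).
      rewrite (count_split (fun y => _ && negb _) (fun y => dec (y = w))).
      assert (E1 : count (fun y => dec (xval a < xval y < b) && dec (xval y < xval w)) S = cc (w :: Z1) x1 S).
      { apply count_ext; intros y _. rewrite dec_and. apply dec_iff. rewrite C1. lra. }
      assert (E2 : count (fun y => dec (xval a < xval y < b) && negb (dec (xval y < xval w)) && dec (y = w)) S = 1%nat).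
      { rewrite <- (count_eq1 S w) by auto.
        apply count_ext; intros y _. rewrite dec_not, !dec_and. apply dec_iff. split.
        + intros [_ ?]; auto.
        + intros ->. split; [split|auto]; lra. }
      assert (E3 : count (fun y => dec (xval a < xval y < b) && negb (dec (xval y < xval w)) && negb (dec (y = w))) S = cc (w :: Z1) x2 S).
      { apply count_ext; intros y _. rewrite !dec_not, !dec_and. apply dec_iff. rewrite C2. split.
        + intros [[? ?] ?]. assert (xval y <> xval w) by (intro Ey; apply H3, X_eq; auto). lra.
        + intros ?. split; [split|]; try lra. intros ->; lra. }
      rewrite E1. rewrite E2. rewrite E3. unfold cc; lia. }
    rewrite E. apply mod4_3; apply H; auto.
  - assert (Hxw : x <> w) by (intros ->; apply Nxw, comp_refl; auto).
    assert (E : cc Z1 x S = cc (w :: Z1) x S); [|rewrite E; apply H; intros [E'|E']; auto].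
    unfold cc. apply count_ext; intros y _. apply dec_iff. split.
    + intros Hc. assert (Hy := comp_notin _ _ _ Hc). split.
      * intros [E|Hin]; [subst; apply Nxw; auto|auto].
      * intros z [E|Hz]; [subst z|apply (proj2 Hc); auto].
        destruct (Rlt_dec (xval w) (xval x)), (Rlt_dec (xval w) (xval y)); try tauto; exfalso; apply Nxw;
          apply comp_seg with (y := y); auto; lra.
    + intros [Hy Hc]. split; [intro; apply Hy; right; auto|]. intros z Hz; apply Hc; right; auto.
Qed.

Lemma OC' (L : list X) : forall Z0 S, In x0 Z0 -> NoDup S -> incl (L ++ Z0) S ->
  (forall x, ~ In x (L ++ Z0) -> (cc (L ++ Z0) x S mod 4 = 3)%nat) ->
  forall x, ~ In x Z0 -> (cc Z0 x S mod 4 = 3)%nat.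
Proof.
  induction L as [|w L IH]; intros Z0 S H0 HS Hinc H; simpl in *; auto.
  apply IH; auto.
  - intros y Hy; apply Hinc; right; auto.
  - apply STEP with (w := w); auto.
    + apply in_or_app; right; auto.
    + apply Hinc; left; auto.
Qed.

Lemma OC (Z0 Z S : list X) : In x0 Z0 -> incl Z0 Z -> NoDup S -> incl Z S ->
  (forall x, ~ In x Z -> (cc Z x S mod 4 = 3)%nat) ->
  forall x, ~ In x Z0 -> (cc Z0 x S mod 4 = 3)%nat.
Proof.
  intros H0 H1 HS H2 H.
  assert (M : forall z, In z (Z ++ Z0) <-> In z Z).
  { intros z; rewrite in_app_iff; split; [intros [|]; auto|auto]. }
  apply (OC' Z); auto.
  - intros z Hz; apply H2, M, Hz.
  - intros x Hx. rewrite (cc_ext _ Z) by auto. apply H. rewrite <- M; auto.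
Qed.


Definition nxt (Z : list X) (z : X) : R :=
  proj1_sig (constructive_indefinite_description _ (minabove Z z)).
Lemma nxt_spec Z z : (xval z < nxt Z z <= 1) /\
  (forall z', In z' Z -> xval z < xval z' -> nxt Z z <= xval z') /\
  (nxt Z z = 1 \/ exists z', In z' Z /\ xval z' = nxt Z z).
Proof. unfold nxt; destruct constructive_indefinite_description; simpl; auto. Qed.

Lemma pt_range Z z c : 0 < c < 1 -> 0 <= xval z + c * (nxt Z z - xval z) < 1.
Proof. intros Hc. pose proof (xval_range z). destruct (nxt_spec Z z) as [[H1 H2] _]. split; nra. Qed.
Definition ptX Z z c (H : 0 < c < 1) : X := exist _ _ (pt_range Z z c H).
Lemma q1 : 0 < 1/4 < 1. Proof. lra. Qed.
Lemma q2 : 0 < 1/2 < 1. Proof. lra. Qed.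
Lemma q3 : 0 < 3/4 < 1. Proof. lra. Qed.
Definition blk Z z : list X := [ptX Z z _ q1; ptX Z z _ q2; ptX Z z _ q3].

Lemma blk_in Z z t : In t (blk Z z) -> xval z < xval t < nxt Z z.
Proof.
  destruct (nxt_spec Z z) as [[H1 H2] _].
  intros [<-|[<-|[<-|[]]]]; simpl; nra.
Qed.

Lemma NoZ_nxt Z z : forall z', In z' Z -> xval z' <= xval z \/ nxt Z z <= xval z'.
Proof.
  intros z' Hz'. destruct (Rle_dec (xval z') (xval z)); [left; auto|right].
  apply (proj1 (proj2 (nxt_spec Z z))); auto; lra.
Qed.

Lemma blk_cmp Z z t : In z Z -> In t (blk Z z) -> forall y, cmp Z t y <-> xval z < xval y < nxt Z z.
Proof.
  intros Hz Ht. apply CHAR.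
  - apply blk_in; auto.
  - apply NoZ_nxt.
  - exists z; auto.
  - destruct (nxt_spec Z z) as [_ [_ H]]. destruct H as [E|[z' [H1 H2]]]; [left; auto|right; exists z'; auto].
Qed.

Lemma count_flat_map {A} (p : A -> bool) (F : A -> list A) l :
  count p (flat_map F l) = list_sum (map (fun z => count p (F z)) l).
Proof. induction l; [reflexivity|]. simpl. rewrite count_app, IHl. reflexivity. Qed.

Lemma sum_single {A} (h : A -> nat) l a : NoDup l -> In a l -> (forall z, In z l -> z <> a -> h z = 0%nat) ->
  list_sum (map h l) = h a.
Proof.
  induction l as [|b l IH]; intros Hn Ha H; [destruct Ha|]. inversion Hn; subst. simpl.
  destruct Ha as [<-|Ha].
  - rewrite (list_sum_const h l 0); [lia|]. intros z Hz; apply H; [right; auto|intros ->; auto].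
  - rewrite H by (try (left; auto); intros ->; auto). rewrite IH; auto. intros z Hz; apply H; right; auto.
Qed.

Lemma NoDup_flat_map {A} (F : A -> list A) l : NoDup l -> (forall z, In z l -> NoDup (F z)) ->
  (forall z z' t, In z l -> In z' l -> In t (F z) -> In t (F z') -> z = z') -> NoDup (flat_map F l).
Proof.
  induction l as [|a l IH]; intros Hn H1 H2; simpl; [constructor|]. inversion Hn; subst.
  apply NoDup_app.
  - apply H1; left; auto.
  - apply IH; auto. intros; apply H1; right; auto. intros; eapply H2; eauto; right; auto.
  - intros t Ht Ht'. apply in_flat_map in Ht' as [z [Hz Hzt]].
    assert (a = z) by (eapply H2; eauto; [left; auto|right; auto]). subst; auto.
Qed.

Lemma CONS Z : In x0 Z -> exists T, NoDup T /\ incl Z T /\ forall x, ~ In x Z -> cc Z x T = 3%nat.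
Proof.
  intros H0. set (Zd := nodup X_eq_dec Z).
  assert (HZd : forall z, In z Zd <-> In z Z) by (intros; apply nodup_In).
  exists (Zd ++ flat_map (blk Z) Zd). split; [|split].
  - apply NoDup_app.
    + apply NoDup_nodup.
    + apply NoDup_flat_map. apply NoDup_nodup.
      * intros z _. pose proof (xval_range z). destruct (nxt_spec Z z) as [[H1 H2] _].
        repeat constructor; simpl; intros E; repeat destruct E as [E|E]; try (apply (f_equal xval) in E; simpl in E; nra); auto.
      * intros z z' t Hz Hz' Ht Ht'. apply HZd in Hz, Hz'.
        apply blk_in in Ht, Ht'. apply X_eq.
        destruct (NoZ_nxt Z z z' Hz'), (NoZ_nxt Z z' z Hz); lra.
    + intros t Ht Ht'. apply HZd in Ht. apply in_flat_map in Ht' as [z [Hz Hzt]].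
      apply blk_in in Hzt. destruct (NoZ_nxt Z z t Ht); lra.
  - intros z Hz. apply in_or_app; left; apply HZd; auto.
  - intros x Hx. assert (Hx0 : 0 < xval x) by (apply (x0_notin_pos Z); auto).
    destruct (maxbelow Z x) as [a [Ha [Hax Hmax]]].
    { exists x0; split; [auto|rewrite xval_x0; lra]. }
    assert (Hxn : xval x < nxt Z a).
    { destruct (nxt_spec Z a) as [[H1 H2] [H3 [E|[z' [Hz' E]]]]].
      - pose proof (xval_range x); lra.
      - destruct (Rlt_dec (xval z') (xval x)) as [Hl|Hl].
        + specialize (Hmax z' Hz' Hl). lra.
        + destruct (Req_dec (xval z') (xval x)) as [E'|E'].
          * exfalso; apply Hx; rewrite <- (X_eq _ _ E'); auto.
          * lra. }
    assert (Cx : forall y, cmp Z x y <-> xval a < xval y < nxt Z a).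
    { apply CHAR.
      - lra.
      - intros z Hz. destruct (Rlt_dec (xval z) (xval x)) as [Hl|Hl]; [left; apply Hmax; auto|right].
        apply (proj1 (proj2 (nxt_spec Z a))); auto.
        destruct (Req_dec (xval z) (xval x)) as [E'|E']; [|lra].
        exfalso; apply Hx; rewrite <- (X_eq _ _ E'); auto.
      - exists a; auto.
      - destruct (nxt_spec Z a) as [_ [_ H]]. destruct H as [E|[z' [H1 H2]]]; [left; auto|right; exists z'; auto]. }
    unfold cc. rewrite count_app, count_flat_map.
    rewrite count_false.
    2:{ intros z Hz. apply decF. intros Hc. apply HZd in Hz. apply (comp_notin _ _ _ Hc Hz). }
    rewrite (sum_single _ Zd a); [| apply NoDup_nodup | apply HZd; auto |].
    + simpl. rewrite count_true; [reflexivity|]. intros t Ht. apply decP, Cx. apply (blk_in Z a t Ht).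
    + intros z Hz Hza. apply HZd in Hz. apply count_false. intros t Ht. apply decF. rewrite Cx.
      apply blk_in in Ht. intros Hin.
      assert (Nza : xval z <> xval a) by (intro E; apply Hza, X_eq; auto).
      destruct (NoZ_nxt Z z a Ha), (NoZ_nxt Z a z Hz); lra.
Qed.


Lemma decT (P : Prop) : P -> dec P = true. Proof. apply decP. Qed.
Lemma decE (P : Prop) : dec P = true -> P. Proof. apply decP. Qed.
Lemma decFa (P : Prop) : ~ P -> dec P = false. Proof. apply decF. Qed.

Lemma inv_excl f x y : inv f x y && inv f y x = false.
Proof.
  unfold inv. destruct (ltb x y) eqn:E1, (ltb y x) eqn:E2; simpl; auto.
  - apply ltbP in E1; apply ltbP in E2; lra.
  - destruct (ltb (f y) (f x)); auto.
Qed.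

Lemma J2 f S : dsum (Jb f) S S = (2 * dsum (inv f) S S)%nat.
Proof.
  rewrite (dsum_split (Jb f) (inv f)).
  rewrite (dsum_ext _ (inv f)).
  2:{ intros x y _ _. unfold Jb. destruct (inv f x y), (inv f y x); reflexivity. }
  rewrite (dsum_ext (fun x y => Jb f x y && negb (inv f x y)) (fun x y => inv f y x)).
  2:{ intros x y _ _. unfold Jb. pose proof (inv_excl f x y). destruct (inv f x y), (inv f y x); simpl in *; congruence. }
  assert (dsum (fun x y => inv f y x) S S = dsum (inv f) S S) by (rewrite dsum_swap; reflexivity). lia.
Qed.

Lemma length_filter_split {A} (q : A -> bool) l :
  length l = (length (filter q l) + length (filter (fun y => negb (q y)) l))%nat.
Proof. induction l; simpl; auto. destruct (q a); simpl; lia. Qed.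

Lemma count_filter_split {A} (p q : A -> bool) l :
  count p l = (count p (filter q l) + count p (filter (fun y => negb (q y)) l))%nat.
Proof. induction l; simpl; auto. destruct (q a); simpl; rewrite !count_cons, IHl; lia. Qed.

Lemma NoDup_map_inj_in {A B} (h : A -> B) l x y : NoDup (map h l) -> In x l -> In y l -> h x = h y -> x = y.
Proof.
  induction l as [|a l IH]; simpl; intros Hn Hx Hy E; [destruct Hx|]. inversion Hn; subst.
  destruct Hx as [<-|Hx], Hy as [<-|Hy]; auto.
  - exfalso; apply H1; rewrite E; apply in_map; auto.
  - exfalso; apply H1; rewrite <- E; apply in_map; auto.
Qed.

Lemma MATCH (e : X -> X -> bool) (Hr : forall x, e x x = true) (Hs : forall x y, e x y = e y x)
  (Ht : forall x y z, e x y = true -> e y z = true -> e x z = true) :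
  forall S S', NoDup S -> NoDup S' -> (forall x, count (e x) S = count (e x) S') ->
  exists phi, Permutation (map phi S) S' /\ forall x, In x S -> e x (phi x) = true.
Proof.
  induction S as [|a S IH]; intros S' HS HS' Hc.
  - exists (fun x => x). destruct S' as [|b S']; [split; [constructor|intros ? []]|].
    specialize (Hc b). rewrite count_nil, count_cons, Hr in Hc. lia.
  - inversion HS; subst.
    assert (Hp : (count (e a) S' > 0)%nat) by (rewrite <- Hc, count_cons, Hr; lia).
    destruct (count_pos _ _ Hp) as [a' [Ha' Eaa']].
    destruct (in_split _ _ Ha') as [l1 [l2 E]]. subst S'.
    assert (HS'' : NoDup (l1 ++ l2)) by (eapply NoDup_remove_1; eauto).
    destruct (IH (l1 ++ l2)) as [phi [Hp1 Hp2]]; auto.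
    { intros x. specialize (Hc x). rewrite count_cons, !count_app, count_cons in Hc. rewrite count_app.
      assert (e x a = e x a').
      { destruct (e x a) eqn:E1, (e x a') eqn:E2; auto.
        - assert (e x a' = true) by (apply (Ht x a a'); auto). congruence.
        - assert (e x a = true) by (apply (Ht x a' a); auto; rewrite Hs; auto). congruence. }
      rewrite H in Hc. lia. }
    exists (fun y => if X_eq_dec y a then a' else phi y). split.
    + simpl. destruct X_eq_dec; [|congruence].
      rewrite (map_ext_in _ phi). 2:{ intros y Hy; destruct X_eq_dec; [subst; contradiction|auto]. }
      apply Permutation_trans with (a' :: (l1 ++ l2)); [apply perm_skip, Hp1|apply Permutation_middle].
    + intros x [<-|Hx]; destruct X_eq_dec as [E|E].
      * auto.
      * congruence.
      * subst; contradiction.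
      * apply Hp2; auto.
Qed.

Section Inv.
Variable f : X -> X.
Variable W : list X.
Hypothesis Hf : inj f.
Hypothesis Ha : adm f W.

Lemma same_cmp x y : ~ In x W -> (same W x y <-> cmp W x y).
Proof. intros Hx; split; [intros [<-|[_ H]]; [apply comp_refl|]; auto|intros; right; auto]. Qed.

Lemma TRIM : forall n S, (length S < n)%nat -> NoDup S -> incl W S ->
  (forall x, ~ In x W -> (cc W x S mod 4 = 3)%nat) ->
  exists S0, NoDup S0 /\ incl W S0 /\ (forall x, ~ In x W -> cc W x S0 = 3%nat) /\
    (dsum (Jb f) S0 S0 mod 4 = dsum (Jb f) S S mod 4)%nat.
Proof.
  induction n as [|n IH]; intros S Hlen HS Hinc Hc; [lia|].
  destruct (classic (exists x, ~ In x W /\ cc W x S <> 3%nat)) as [[x [Hx Hne]]|N].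
  2:{ exists S; repeat split; auto. intros x Hx. apply NNPP; intro C; apply N; exists x; auto. }
  assert (H7 : (cc W x S >= 7)%nat).
  { pose proof (Nat.div_mod_eq (cc W x S) 4). specialize (Hc x Hx). lia. }
  remember (filter (fun y => dec (cmp W x y)) S) as F eqn:EF.
  assert (HF : length F = cc W x S) by (subst; reflexivity).
  assert (FS : forall y, In y F -> In y S /\ cmp W x y).
  { intros y Hy; subst F; apply filter_In in Hy as [? Hy]; apply decE in Hy; split; auto. }
  assert (NF : NoDup F) by (subst; apply NoDup_filter; auto).
  destruct F as [|a [|b [|c [|d rest]]]]; simpl in HF; try lia.
  set (R := [a; b; c; d]).
  assert (HR : NoDup R) by (apply (NoDup_app_remove_r R rest); auto).
  assert (RF : forall r, In r R -> In r S /\ cmp W x r).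
  { intros r Hr; apply FS. unfold R in Hr. simpl in Hr |- *. tauto. }
  assert (RW : forall r, In r R -> ~ In r W) by (intros r Hr; eapply comp_notin; apply RF; eauto).
  set (inR := fun y => dec (In y R)).
  set (A := filter inR S). set (S1 := filter (fun y => negb (inR y)) S).
  assert (PA : Permutation A R).
  { apply NoDup_Permutation; [apply NoDup_filter; auto|auto|].
    intros y; unfold A, inR; rewrite filter_In, decP. split; [tauto|]. intros Hy; split; auto; apply RF; auto. }
  assert (LA : length A = 4%nat) by (rewrite (Permutation_length PA); reflexivity).
  assert (LS : length S = (length A + length S1)%nat) by apply length_filter_split.
  assert (S1R : forall y, In y S1 -> ~ In y R).
  { intros y Hy; unfold S1, inR in Hy; apply filter_In in Hy as [_ Hy].
    intro Hin; apply decT in Hin; rewrite Hin in Hy; discriminate. }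
  assert (SR : forall r r', In r R -> In r' R -> same W r r').
  { intros r r' Hr Hr'. right. split; [apply RW; auto|].
    apply (comp_trans W r x r'); [apply comp_sym; auto; apply RF; auto|apply RF; auto]. }
  assert (D : dsum (Jb f) S S = (dsum (Jb f) A A + 2 * dsum (Jb f) A S1 + dsum (Jb f) S1 S1)%nat).
  { rewrite (dsum_filter_l _ inR S S). fold A S1.
    rewrite (dsum_filter_r _ inR A S), (dsum_filter_r _ inR S1 S). fold A S1.
    assert (dsum (Jb f) S1 A = dsum (Jb f) A S1).
    { rewrite dsum_swap. apply dsum_ext. intros; apply Jb_sym. }
    lia. }
  assert (DAS : dsum (Jb f) A S1 = (4 * count (Jb f a) S1)%nat).
  { rewrite (dsum_perm _ A R S1 S1 PA (Permutation_refl _)). unfold dsum.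
    rewrite (list_sum_const _ R (count (Jb f a) S1)); [reflexivity|].
    intros r Hr. apply count_ext. intros y Hy.
    apply (KEY f W Hf Ha); [apply SR; auto; left; auto|apply same_refl| |];
      apply X_neq; intros ->; apply (S1R y Hy); auto; left; auto. }
  assert (DAA : exists k, dsum (Jb f) A A = (4 * k)%nat).
  { rewrite (dsum_perm _ A R A R PA PA). unfold dsum.
    exists (if Jb f a b then 3%nat else 0%nat).
    apply list_sum_const. intros r Hr.
    rewrite (count_ext _ (fun y => Jb f a b && negb (dec (y = r)))).
    - destruct (Jb f a b); simpl.
      + assert (LR : length R = 4%nat) by reflexivity.
        pose proof (length_filter_split (fun y => dec (y = r)) R) as HL.
        pose proof (count_eq1 R r HR Hr) as H1. unfold count in *. cbv beta in HL. lia.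
      + apply count_false; auto.
    - intros y Hy. destruct (X_eq_dec y r) as [->|Nyr].
      + rewrite Jb_irr. rewrite (proj2 (decP _) eq_refl). destruct (Jb f a b); auto.
      + rewrite (proj2 (decF _) Nyr). rewrite Bool.andb_true_r.
        apply (KEY f W Hf Ha); [apply SR; auto; left; auto|apply SR; auto; right; left; auto| |].
        * apply X_neq; auto.
        * apply X_neq. intro E. apply (NoDup_cons_iff a [b;c;d]) in HR as [HR _]. apply HR. rewrite E; left; auto. }
  destruct (IH S1) as [S0 [H1 [H2 [H3 H4]]]].
  - lia.
  - apply NoDup_filter; auto.
  - intros w Hw. unfold S1, inR. apply filter_In. split; [apply Hinc; auto|].
    apply Bool.negb_true_iff, decFa. intro Hr; apply (RW w Hr Hw).
  - intros y Hy. specialize (Hc y Hy). unfold cc in *.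
    rewrite (count_filter_split _ inR S) in Hc. fold A S1 in Hc.
    rewrite (count_perm _ A R PA) in Hc.
    destruct (classic (cmp W y x)) as [Cyx|Nyx].
    + rewrite count_true in Hc.
      * set (cnt := count (fun y0 : X => dec (cmp W y y0)) S1) in *.
        assert (LR : length R = 4%nat) by reflexivity.
        rewrite LR, Nat.add_comm in Hc. rewrite <- (mod4_lin cnt 1). exact Hc.
      * intros r Hr. apply decT. apply (comp_trans W y x r); auto. apply RF; auto.
    + rewrite count_false in Hc; auto.
      intros r Hr. apply decFa. intros Cyr. apply Nyx. apply (comp_trans W y r x); auto.
      apply comp_sym; [auto|apply RF; auto].
  - exists S0. repeat split; auto. rewrite H4, D. destruct DAA as [k ->]. rewrite DAS.
    replace (4 * k + 2 * (4 * count (Jb f a) S1) + dsum (Jb f) S1 S1)%nat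
      with (dsum (Jb f) S1 S1 + 4 * (k + 2 * count (Jb f a) S1))%nat by lia.
    rewrite mod4_lin; auto.
Qed.

Lemma INV S S' : NoDup S -> NoDup S' -> incl W S -> incl W S' ->
  (forall x, ~ In x W -> (cc W x S mod 4 = 3)%nat) ->
  (forall x, ~ In x W -> (cc W x S' mod 4 = 3)%nat) ->
  Nat.odd (inversions f S) = Nat.odd (inversions f S').
Proof.
  intros HS HS' Hi Hi' Hc Hc'. rewrite !inversions_dsum. apply odd_mod4. rewrite <- !J2.
  destruct (TRIM (Datatypes.S (length S)) S) as [S0 [N0 [I0 [C0 E0]]]]; auto.
  destruct (TRIM (Datatypes.S (length S')) S') as [S0' [N0' [I0' [C0' E0']]]]; auto.
  rewrite <- E0, <- E0'. f_equal.
  set (e := fun x y => dec (same W x y)).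
  destruct (MATCH e) with (S := S0) (S' := S0') as [phi [Hp He]]; auto.
  - intros x; apply decT, same_refl.
  - intros x y; apply dec_iff; split; apply same_sym.
  - intros x y z H1 H2; apply decE in H1, H2; apply decT; eapply same_trans; eauto.
  - intros x. destruct (classic (In x W)) as [Hx|Hx].
    + assert (Ex : forall l, count (e x) l = count (fun y => dec (y = x)) l).
      { intros l; apply count_ext; intros y _; apply dec_iff. split; [intros [<-|[C _]]; auto; contradiction|intros ->; left; auto]. }
      rewrite !Ex, !count_eq1; auto.
    + assert (Ex : forall l, count (e x) l = cc W x l).
      { intros l; apply count_ext; intros y _; apply dec_iff, same_cmp; auto. }
      rewrite !Ex, C0, C0'; auto.
  - rewrite (dsum_perm _ S0' (map phi S0) S0' (map phi S0)) by (apply Permutation_sym; auto).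
    rewrite dsum_map. symmetry. apply dsum_ext. intros x y Hx Hy.
    assert (ND : NoDup (map phi S0)) by (apply (Permutation_NoDup (Permutation_sym Hp)); auto).
    destruct (X_eq_dec x y) as [<-|Nxy]; [rewrite !Jb_irr; auto|].
    symmetry. apply (KEY f W Hf Ha).
    + apply decE, He; auto.
    + apply decE, He; auto.
    + apply X_neq; auto.
    + apply X_neq. intro E; apply Nxy. eapply NoDup_map_inj_in; eauto.
Qed.

End Inv.


Lemma ltb_neg u v : xval u <> xval v -> ltb u v = negb (ltb v u).
Proof. intros H; unfold ltb; destruct Rlt_dec, Rlt_dec; simpl; auto; lra. Qed.
Lemma ltb_irr u : ltb u u = false.
Proof. unfold ltb; destruct Rlt_dec; auto; lra. Qed.

Lemma COC f g S : inj f -> inj g ->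
  Nat.odd (inversions (fun x => f (g x)) S) =
  xorb (Nat.odd (inversions g S)) (Nat.odd (inversions f (map g S))).
Proof.
  intros Hf Hg. rewrite !inversions_dsum, dsum_map.
  assert (DI : forall x y, x <> y -> xval x <> xval y /\ xval (g x) <> xval (g y) /\ xval (f (g x)) <> xval (f (g y))).
  { intros x y N. assert (N1 := X_neq _ _ N). split; auto.
    assert (N2 := inj_neq g _ _ Hg N1). split; auto. apply inj_neq; auto. }
  set (P := fun x y => ltb x y). set (A := fun x y => ltb (g y) (g x)).
  set (C := fun x y => ltb (f (g y)) (f (g x))).
  assert (E1 : dsum (inv (fun x => f (g x))) S S =
    (dsum (fun x y => P x y && A x y && C x y) S S + dsum (fun x y => P x y && negb (A x y) && C x y) S S)%nat).
  { rewrite (dsum_split _ A). f_equal; apply dsum_ext; intros x y _ _; unfold inv, P, A, C;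
    destruct (ltb x y), (ltb (g y) (g x)), (ltb (f (g y)) (f (g x))); reflexivity. }
  assert (E2 : dsum (inv g) S S =
    (dsum (fun x y => P x y && A x y && C x y) S S + dsum (fun x y => P x y && A x y && negb (C x y)) S S)%nat).
  { rewrite (dsum_split _ C). f_equal; apply dsum_ext; intros x y _ _; unfold inv, P, A, C;
    destruct (ltb x y), (ltb (g y) (g x)), (ltb (f (g y)) (f (g x))); reflexivity. }
  assert (E3 : dsum (fun x y => inv f (g x) (g y)) S S =
    (dsum (fun x y => P x y && negb (A x y) && C x y) S S + dsum (fun x y => P x y && A x y && negb (C x y)) S S)%nat).
  { rewrite (dsum_split _ P). f_equal.
    - apply dsum_ext; intros x y _ _; unfold inv, P, A, C.
      destruct (X_eq_dec x y) as [<-|N]; [rewrite !ltb_irr; btauto|].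
      destruct (DI x y N) as [_ [N2 _]]. rewrite (ltb_neg (g x) (g y) N2). btauto.
    - rewrite dsum_swap. apply dsum_ext; intros x y _ _; unfold inv, P, A, C.
      destruct (X_eq_dec x y) as [<-|N]; [rewrite !ltb_irr; btauto|].
      destruct (DI x y N) as [N1 [_ N3]].
      rewrite (ltb_neg y x) by auto. rewrite (ltb_neg (f (g x)) (f (g y))) by auto. btauto. }
  rewrite E1, E2, E3, !Nat.odd_add.
  destruct (Nat.odd (dsum (fun x y => P x y && A x y && C x y) S S)),
    (Nat.odd (dsum (fun x y => P x y && negb (A x y) && C x y) S S)),
    (Nat.odd (dsum (fun x y => P x y && A x y && negb (C x y)) S S)); reflexivity.
Qed.

Lemma FIXADD f z L : inj f -> NoDup L -> ~ In z L -> f z = z -> (forall x, In x L -> In (f x) L) ->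
  Nat.odd (inversions f (z :: L)) = Nat.odd (inversions f L).
Proof.
  intros Hf HL Hz Hfz HLf. rewrite !inversions_dsum.
  rewrite dsum_cons_l, count_cons, dsum_cons_r.
  assert (Ezz : inv f z z = false) by (unfold inv; rewrite ltb_irr; auto). rewrite Ezz.
  assert (NxL : forall x, In x L -> xval x <> xval z) by (intros x Hx E; apply Hz; rewrite <- (X_eq _ _ E); auto).
  assert (NfL : forall x, In x L -> xval (f x) <> xval z).
  { intros x Hx E. apply Hz. rewrite <- Hfz in E. rewrite <- (Hf _ _ (X_eq _ _ E)); auto. }
  assert (Pm : Permutation (map f L) L).
  { apply Permutation_map_same_l. apply FinFun.Injective_map_NoDup; auto.
    intros y Hy; apply in_map_iff in Hy as [x [<- Hx]]; auto. }
  assert (C1 : count (fun x => ltb x z) L = count (fun x => ltb (f x) z) L).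
  { rewrite <- (count_map (fun y => ltb y z) f L). symmetry; apply count_perm; auto. }
  rewrite (count_split (fun x => ltb x z) (fun x => ltb (f x) z)) in C1.
  rewrite (count_split (fun x => ltb (f x) z) (fun x => ltb x z)) in C1.
  assert (K1 : count (fun x => ltb x z && negb (ltb (f x) z)) L = count (fun x => inv f x z) L).
  { apply count_ext; intros x Hx. unfold inv. rewrite Hfz. rewrite (ltb_neg (f x) z) by auto. btauto. }
  assert (K2 : count (fun x => ltb (f x) z && negb (ltb x z)) L = count (inv f z) L).
  { apply count_ext; intros x Hx. unfold inv. rewrite Hfz. rewrite (ltb_neg x z) by auto. btauto. }
  assert (K3 : count (fun x => ltb x z && ltb (f x) z) L = count (fun x => ltb (f x) z && ltb x z) L).
  { apply count_ext; intros x Hx. btauto. }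
  assert (E : count (inv f z) L = count (fun x => inv f x z) L) by lia.
  rewrite E.
  replace (0 + count (fun x => inv f x z) L + (count (fun x => inv f x z) L + dsum (inv f) L L))%nat
    with (dsum (inv f) L L + 2 * count (fun x => inv f x z) L)%nat by lia.
  apply Nat.odd_add_mul_2.
Qed.


Definition good (f : X -> X) (S : list X) : Prop :=
  NoDup S /\ exists Z, adm f Z /\ incl Z S /\ forall x, ~ In x Z -> (cc Z x S mod 4 = 3)%nat.

Lemma good_inv f S S' : inj f -> good f S -> good f S' ->
  Nat.odd (inversions f S) = Nat.odd (inversions f S').
Proof.
  intros Hf [HS [Z [HZ [HiZ HcZ]]]] [HS' [Z' [HZ' [HiZ' HcZ']]]].
  set (W := filter (fun z => dec (In z Z')) Z).
  assert (MW : forall z, In z W <-> In z Z /\ In z Z').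
  { intros z; unfold W; rewrite filter_In. split; intros [H1 H2]; split; auto; [apply decE|apply decT]; auto. }
  assert (HW : adm f W).
  { split. { apply MW; split; [apply HZ|apply HZ']. }
    intros x Hx. destruct (classic (In x Z)) as [H1|H1]; [destruct (classic (In x Z')) as [H2|H2]|].
    - exfalso; apply Hx, MW; auto.
    - apply (proj2 HZ'); auto.
    - apply (proj2 HZ); auto. }
  apply (INV f W Hf HW); auto.
  - intros z Hz; apply HiZ, MW, Hz.
  - intros z Hz; apply HiZ', MW, Hz.
  - apply (OC W Z S); auto. apply (proj1 HW). intros z Hz; apply MW, Hz.
  - apply (OC W Z' S'); auto. apply (proj1 HW). intros z Hz; apply MW, Hz.
Qed.

Definition eps (f : X -> X) : bool := dec (exists S, good f S /\ Nat.odd (inversions f S) = true).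

Lemma eps_spec f S : inj f -> good f S -> eps f = Nat.odd (inversions f S).
Proof.
  intros Hf HS. unfold eps. destruct (Nat.odd (inversions f S)) eqn:E.
  - apply decT. exists S; auto.
  - apply decFa. intros [S' [HS' E']]. rewrite (good_inv f S S') in E; auto. congruence.
Qed.

Lemma comp_cont f g x : continuous_at_X g x -> continuous_at_X f (g x) ->
  continuous_at_X (fun y => f (g y)) x.
Proof.
  intros Hg Hf e He. destruct (Hf e He) as [d1 [Hd1 H1]]. destruct (Hg d1 Hd1) as [d2 [Hd2 H2]].
  exists d2; split; auto.
Qed.

Lemma hom_part f g : PC_hat f -> PC_hat g -> eps (fun x => f (g x)) = xorb (eps f) (eps g).
Proof.
  intros [[fi [Hf1 Hf2]] [Ff HFf]] [[gi [Hg1 Hg2]] [Fg HFg]].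
  assert (injf : inj f) by (intros x y E; rewrite <- (Hf1 x), <- (Hf1 y), E; auto).
  assert (injg : inj g) by (intros x y E; rewrite <- (Hg1 x), <- (Hg1 y), E; auto).
  set (Zf := x0 :: Ff). set (Zg := x0 :: Fg).
  assert (Af : adm f Zf) by (split; [left; auto| intros x Hx; apply HFf; intro; apply Hx; right; auto]).
  assert (Ag : adm g Zg) by (split; [left; auto| intros x Hx; apply HFg; intro; apply Hx; right; auto]).
  set (Zd := Zg ++ map gi Zf). set (Zm := map g Zd).
  assert (Agd : adm g Zd).
  { split; [apply in_or_app; left; left; auto|].
    intros x Hx; apply (proj2 Ag); intro; apply Hx; apply in_or_app; left; auto. }
  assert (Ahd : adm (fun x => f (g x)) Zd).
  { split; [apply (proj1 Agd)|]. intros x Hx. apply comp_cont.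
    - apply (proj2 Ag); intro; apply Hx, in_or_app; left; auto.
    - apply (proj2 Af). intro H; apply Hx, in_or_app; right. rewrite <- (Hg1 x). apply in_map; auto. }
  assert (MZf : forall y, In y Zf -> In y Zm).
  { intros y Hy. unfold Zm. rewrite <- (Hg2 y). apply in_map, in_or_app; right; apply in_map; auto. }
  assert (Am : adm f Zm).
  { split; [apply MZf; left; auto|]. intros y Hy; apply (proj2 Af); intro; apply Hy, MZf; auto. }
  assert (H0m : In x0 Zm) by (apply (proj1 Am)).
  destruct (CONS Zm H0m) as [T [NT [IT CT]]].
  set (S := map gi T).
  assert (NS : NoDup S).
  { apply FinFun.Injective_map_NoDup; auto. intros a b E. rewrite <- (Hg2 a), <- (Hg2 b), E; auto. }
  assert (IS : incl Zd S).
  { intros z Hz. unfold S. rewrite <- (Hg1 z). apply in_map, IT. apply in_map; auto. }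
  assert (CS : forall x, ~ In x Zd -> (cc Zd x S mod 4 = 3)%nat).
  { intros x Hx. unfold cc, S. rewrite count_map.
    rewrite (count_ext _ (fun t => dec (cmp Zm (g x) t))).
    - fold (cc Zm (g x) T). rewrite CT; auto. apply (notin_map g gi Zd Hg1 x Hx).
    - intros t _. apply dec_iff. rewrite (Lstar g gi Zd Hg1 Hg2 Agd x (gi t) Hx), Hg2. tauto. }
  assert (Gg : good g S) by (split; auto; exists Zd; auto).
  assert (Gh : good (fun x => f (g x)) S) by (split; auto; exists Zd; auto).
  assert (Gf : good f T).
  { split; auto; exists Zm; split; auto; split; auto. intros y Hy; rewrite CT; auto. }
  assert (MS : map g S = T).
  { unfold S. rewrite map_map. rewrite (map_ext _ (fun y => y)) by auto. apply map_id. }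
  rewrite (eps_spec _ S), (eps_spec g S), (eps_spec f T); auto.
  - rewrite COC, MS; auto. apply Bool.xorb_comm.
  - intros x y E. apply injg, injf, E.
Qed.

Lemma fin_part f : fin_supp_perm f -> fin_signature f (eps f).
Proof.
  intros [[fi [Hf1 Hf2]] [s0 Hs0]].
  assert (injf : inj f) by (intros x y E; rewrite <- (Hf1 x), <- (Hf1 y), E; auto).
  set (Z := x0 :: s0).
  assert (Fix : forall x, ~ In x s0 -> f x = x) by (intros x Hx; apply NNPP; intro C; apply Hx, Hs0, C).
  assert (AZ : adm f Z).
  { split; [left; auto|]. intros x Hx.
    assert (Hx' : ~ In x s0) by (intro; apply Hx; right; auto).
    destruct (dist_list x s0) as [eta [Heta Hd]].
    { intros z Hz E. apply Hx'. rewrite <- (X_eq _ _ E); auto. }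
    intros e He. exists (Rmin e eta). split; [apply Rmin_pos; auto|].
    intros y Hy. assert (Hy' : ~ In y s0).
    { intros Hin. specialize (Hd y Hin). pose proof (Rmin_r e eta). lra. }
    rewrite (Fix y Hy'), (Fix x Hx'). pose proof (Rmin_l e eta). lra. }
  destruct (CONS Z (proj1 AZ)) as [T [NT [IT CT]]].
  assert (GT : good f T) by (split; auto; exists Z; split; auto; split; auto; intros y Hy; rewrite CT; auto).
  rewrite (eps_spec f T injf GT).
  set (s := filter (fun x => dec (f x <> x)) (nodup X_eq_dec s0)).
  assert (Ms : forall x, f x <> x <-> In x s).
  { intros x; unfold s; rewrite filter_In, nodup_In. split.
    - intros H; split; [apply Hs0; auto|apply decT; auto].
    - intros [_ H]; apply decE; auto. }
  exists s. split; [apply NoDup_filter, NoDup_nodup|]. split; [auto|].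
  set (R := filter (fun x => dec (f x = x)) T).
  assert (NsR : NoDup (s ++ R)).
  { apply NoDup_app; [apply NoDup_filter, NoDup_nodup|apply NoDup_filter; auto|].
    intros a Ha HaR. apply Ms in Ha. unfold R in HaR. apply filter_In in HaR as [_ HaR]. apply decE in HaR. auto. }
  assert (PT : Permutation T (s ++ R)).
  { apply NoDup_Permutation; auto. intros x. rewrite in_app_iff. unfold R; rewrite filter_In. split.
    - intros Hx. destruct (classic (f x = x)) as [E|E]; [right; split; auto; apply decT; auto|left; apply Ms; auto].
    - intros [Hx|[Hx _]]; auto. apply IT. right. apply Hs0, Ms, Hx. }
  assert (Rfix : forall x, In x R -> f x = x).
  { intros x Hx; unfold R in Hx; apply filter_In in Hx as [_ Hx]; apply decE; auto. }
  assert (sstab : forall x, In x s -> In (f x) s).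
  { intros x Hx. apply Ms in Hx. apply Ms. intro E. apply Hx, injf, E. }
  rewrite !inversions_dsum, (dsum_perm _ T (s ++ R) T (s ++ R)) by auto. rewrite <- !inversions_dsum.
  clear PT. revert NsR Rfix. generalize R. intros R0.
  induction R0 as [|r R' IH]; intros NsR Rfix; [rewrite app_nil_r; reflexivity|].
  rewrite !inversions_dsum, (dsum_perm _ (s ++ r :: R') (r :: s ++ R') (s ++ r :: R') (r :: s ++ R'))
    by (apply Permutation_sym, Permutation_middle). rewrite <- !inversions_dsum.
  rewrite FIXADD; auto.
  - apply IH. eapply NoDup_remove_1; eauto. intros x Hx; apply Rfix; right; auto.
  - eapply NoDup_remove_1; eauto.
  - eapply NoDup_remove_2; eauto.
  - apply Rfix; left; auto.
  - intros x Hx. apply in_app_iff in Hx as [Hx|Hx]; apply in_app_iff; [left; auto|right].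
    rewrite Rfix; auto. right; auto.
Qed.

Theorem theorem1p1 :
  exists eps : (X -> X) -> bool,
    (forall f g : X -> X, PC_hat f -> PC_hat g ->
       eps (fun x => f (g x)) = xorb (eps f) (eps g)) /\
    (forall f : X -> X, fin_supp_perm f -> fin_signature f (eps f)).
Proof.
  exists eps. split; [apply hom_part|apply fin_part].
Qed.
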